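(* Let $U\subseteq\mathbb{E}^s$ be a Pseudo-Riemannian affine homogeneous domain and let $G\le \mathrm{Isom}(U)$ be a subgroup having an open orbit in $\mathbb{R}^n$. Then the centraliser $Z$ of $G$ in $E(s)$ is a connected unipotent group which is nilpotent of class at most two, and every $g\in Z$ satisfies $(g-I_{n+1})^2=0$.
   Context: $\mathbb{E}^s=(\mathbb{R}^n,\langle\cdot,\cdot\rangle_s)$ is pseudo-Euclidean space with a scalar product of signature $s$, and $E(s)=\mathbb{R}^n\rtimes O(s)$ its isometry group, viewed in $\mathrm{Aff}(n)\subset GL(n+1,\mathbb{R})$ via $\begin{pmatrix} g&t\\0&1\end{pmatrix}$. A Pseudo-Riemannian affine homogeneous domain is a connected open $U\subseteq\mathbb{R}^n$ such that $\mathrm{Isom}(U)=\{A\in E(s):A(U)=U\}$ acts transitively on $U$. $I_{n+1}$ is the identity matrix. *)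

(* Defs.v *)
From Stdlib Require Import Reals.
From mathcomp Require Import ssreflect ssrfun ssrbool eqtype ssrnat seq fintype bigop.

Set Implicit Arguments.
Unset Strict Implicit.
Unset Printing Implicit Defensive.

Local Open Scope R_scope.

Definition vec (n : nat) := 'I_n -> R.
Definition mat (N : nat) := 'I_N -> 'I_N -> R.

Definition mmul (N : nat) (A B : mat N) : mat N :=
  fun i j => \big[Rplus/0]_(k < N) (A i k * B k j).
Definition mid (N : nat) : mat N := fun i j => if i == j then 1 else 0.
Definition mzero (N : nat) : mat N := fun _ _ => 0.
Arguments mid : clear implicits.
Arguments mzero : clear implicits.
Definition msub (N : nat) (A B : mat N) : mat N := fun i j => A i j - B i j.
Fixpoint mpow (N : nat) (A : mat N) (k : nat) : mat N :=
  match k with O => mid N | S k' => mmul A (mpow A k') end.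
Definition mtr (N : nat) (A : mat N) : mat N := fun i j => A j i.

(* Coordinates 0..n-1 of R^{n+1}; the last index ord_max is the affine one. *)
Definition emb (n : nat) (i : 'I_n) : 'I_n.+1 := widen_ord (leqnSn n) i.

(* Linear part g of an affine matrix [[g, t],[0, 1]]. *)
Definition linpart (n : nat) (A : mat n.+1) : mat n :=
  fun i j => A (emb i) (emb j).

(* A scalar product on R^n: a nondegenerate symmetric bilinear form with
   Gram matrix S (its signature s is whatever it is). *)
Definition scalar_product (n : nat) (S : mat n) : Prop :=
  (forall i j, S i j = S j i) /\
  (forall x : vec n,
     (forall y : vec n,
        \big[Rplus/0]_(i < n) \big[Rplus/0]_(j < n) (x i * S i j * y j) = 0) ->
     forall i, x i = 0).

(* The isometry group E(s) = R^n x| O(s), inside Aff(n) ⊂ GL(n+1, R). *)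
Definition in_E (n : nat) (S : mat n) (A : mat n.+1) : Prop :=
  (forall j : 'I_n, A ord_max (emb j) = 0) /\ A ord_max ord_max = 1 /\
  mmul (mtr (linpart A)) (mmul S (linpart A)) = S.

Definition act (n : nat) (A : mat n.+1) (x : vec n) : vec n :=
  fun i => \big[Rplus/0]_(k < n) (A (emb i) (emb k) * x k) + A (emb i) ord_max.

Definition openV (n : nat) (P : vec n -> Prop) : Prop :=
  forall x, P x -> exists eps, 0 < eps /\
    forall y : vec n, (forall i, Rabs (y i - x i) < eps) -> P y.
Definition openM (N : nat) (P : mat N -> Prop) : Prop :=
  forall A, P A -> exists eps, 0 < eps /\
    forall B : mat N, (forall i j, Rabs (B i j - A i j) < eps) -> P B.

Definition connected_in (T : Type) (opn : (T -> Prop) -> Prop) (Z : T -> Prop) :=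
  forall O1 O2, opn O1 -> opn O2 ->
    (forall z, Z z -> O1 z \/ O2 z) ->
    (forall z, Z z -> O1 z -> O2 z -> False) ->
    (forall z, Z z -> ~ O1 z) \/ (forall z, Z z -> ~ O2 z).

Definition Isom (n : nat) (S : mat n) (U : vec n -> Prop) (A : mat n.+1) : Prop :=
  in_E S A /\ forall y, U y <-> exists x, U x /\ act A x = y.

Definition homogeneous_domain (n : nat) (S : mat n) (U : vec n -> Prop) : Prop :=
  (exists x, U x) /\ openV U /\ connected_in (@openV n) U /\
  forall x y, U x -> U y -> exists A, Isom S U A /\ act A x = y.

Definition is_subgroup (N : nat) (G : mat N -> Prop) : Prop :=
  G (mid N) /\ (forall A B, G A -> G B -> G (mmul A B)) /\
  (forall A, G A -> exists B, G B /\ mmul A B = mid N /\ mmul B A = mid N).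

Definition has_open_orbit (n : nat) (G : mat n.+1 -> Prop) : Prop :=
  exists x : vec n, openV (fun y => exists A, G A /\ act A x = y).

Definition centraliser_E (n : nat) (S : mat n) (G : mat n.+1 -> Prop)
  (g : mat n.+1) : Prop :=
  in_E S g /\ forall h, G h -> mmul g h = mmul h g.

Definition unipotent (N : nat) (g : mat N) : Prop :=
  exists k, mpow (msub g (mid N)) k = mzero N.

(* Nilpotent of class at most two: every commutator [a,b] = a b a^-1 b^-1
   is central. *)
Definition nilpotent_class_le2 (N : nat) (Z : mat N -> Prop) : Prop :=
  forall a a' b b' c, Z a -> Z a' -> Z b -> Z b' -> Z c ->
    mmul a a' = mid N -> mmul b b' = mid N ->
    mmul (mmul (mmul a b) (mmul a' b')) c = mmul c (mmul (mmul a b) (mmul a' b')).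

(* Main.v *)
Require Import Defs.
From Stdlib Require Import Reals Lra FunctionalExtensionality Classical.
From HB Require Import structures.
From mathcomp Require Import ssreflect ssrfun ssrbool eqtype ssrnat seq fintype bigop.
Set Implicit Arguments.
Unset Strict Implicit.
Local Open Scope R_scope.

HB.instance Definition _ := Monoid.isComLaw.Build R 0 Rplus (fun x y z => esym (Rplus_assoc x y z)) Rplus_comm Rplus_0_l.


Lemma sumrMr (n : nat) (c : R) (F : 'I_n -> R) :
  c * (\big[Rplus/0]_(i < n) F i) = \big[Rplus/0]_(i < n) (c * F i).
Proof.
apply: (big_endo (fun x => c * x)) => [x y|]; [ring | ring].
Qed.

Lemma sumrMl (n : nat) (c : R) (F : 'I_n -> R) :
  (\big[Rplus/0]_(i < n) F i) * c = \big[Rplus/0]_(i < n) (F i * c).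
Proof.
apply: (big_endo (fun x => x * c)) => [x y|]; [ring | ring].
Qed.

Lemma sumrD (n : nat) (F G : 'I_n -> R) :
  \big[Rplus/0]_(i < n) (F i + G i) = \big[Rplus/0]_(i < n) F i + \big[Rplus/0]_(i < n) G i.
Proof. exact: big_split. Qed.

Lemma sum0 (n : nat) (F : 'I_n -> R) : (forall i, F i = 0) -> \big[Rplus/0]_(i < n) F i = 0.
Proof. move=> H; rewrite (eq_bigr (fun _ => 0)); first exact: big1_eq. move=> i _; exact: H. Qed.

Lemma sum_delta (n : nat) (i : 'I_n) (F : 'I_n -> R) :
  \big[Rplus/0]_(k < n) ((if i == k then 1 else 0) * F k) = F i.
Proof.
rewrite (bigD1 i) //= eqxx Rmult_1_l big1 ?Rplus_0_r //.
move=> k /negPf; rewrite eq_sym => ->; ring.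
Qed.

Lemma sum_delta' (n : nat) (i : 'I_n) (F : 'I_n -> R) :
  \big[Rplus/0]_(k < n) (F k * (if k == i then 1 else 0)) = F i.
Proof.
rewrite -[RHS](@sum_delta n i F); apply: eq_bigr => k _; rewrite eq_sym; ring.
Qed.

Definition madd (N : nat) (A B : mat N) : mat N := fun i j => A i j + B i j.
Definition mscale (N : nat) (a : R) (A : mat N) : mat N := fun i j => a * A i j.

Arguments madd {N}.
Arguments mscale {N}.
Lemma meq {N : nat} (A B : mat N) : (forall i j, A i j = B i j) -> A = B.
Proof. move=> H; do 2 (apply: functional_extensionality => ?); exact: H. Qed.

Section MatAlg.
Variable N : nat.
Implicit Types A B C : mat N.

Lemma mmulA A B C : mmul (mmul A B) C = mmul A (mmul B C).
Proof.
apply: meq => i j; rewrite /mmul.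
rewrite (eq_bigr (fun k => \big[Rplus/0]_(l < N) (A i l * B l k * C k j))); last first.
  by move=> k _; rewrite sumrMl.
rewrite exchange_big; apply: eq_bigr => l _; rewrite sumrMr; apply: eq_bigr => k _; ring.
Qed.

Lemma mmulDl A B C : mmul (madd A B) C = madd (mmul A C) (mmul B C).
Proof. apply: meq => i j; rewrite /mmul /madd -sumrD; apply: eq_bigr => k _; ring. Qed.
Lemma mmulDr A B C : mmul A (madd B C) = madd (mmul A B) (mmul A C).
Proof. apply: meq => i j; rewrite /mmul /madd -sumrD; apply: eq_bigr => k _; ring. Qed.
Lemma mmulZl a A B : mmul (mscale a A) B = mscale a (mmul A B).
Proof. apply: meq => i j; rewrite /mmul /mscale sumrMr; apply: eq_bigr => k _; ring. Qed.
Lemma mmulZr a A B : mmul A (mscale a B) = mscale a (mmul A B).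
Proof. apply: meq => i j; rewrite /mmul /mscale sumrMr; apply: eq_bigr => k _; ring. Qed.
Lemma mmul1l A : mmul (mid N) A = A.
Proof. apply: meq => i j; rewrite /mmul /mid; exact: sum_delta. Qed.
Lemma mmul1r A : mmul A (mid N) = A.
Proof. apply: meq => i j; rewrite /mmul /mid; exact: sum_delta'. Qed.
Lemma mmul0l A : mmul (mzero N) A = mzero N.
Proof. apply: meq => i j; rewrite /mmul /mzero; apply: sum0 => k; ring. Qed.
Lemma mmul0r A : mmul A (mzero N) = mzero N.
Proof. apply: meq => i j; rewrite /mmul /mzero; apply: sum0 => k; ring. Qed.
Lemma mtr_mul A B : mtr (mmul A B) = mmul (mtr B) (mtr A).
Proof. apply: meq => i j; rewrite /mmul /mtr; apply: eq_bigr => k _; ring. Qed.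
Lemma mtr_add A B : mtr (madd A B) = madd (mtr A) (mtr B).
Proof. by []. Qed.
Lemma mtr_scale a A : mtr (mscale a A) = mscale a (mtr A).
Proof. by []. Qed.
Lemma mtr_id : mtr (mid N) = mid N.
Proof. apply: meq => i j; rewrite /mtr /mid eq_sym //. Qed.
Lemma madd0l A : madd (mzero N) A = A.
Proof. apply: meq => i j; rewrite /madd /mzero; ring. Qed.
Lemma madd0r A : madd A (mzero N) = A.
Proof. apply: meq => i j; rewrite /madd /mzero; ring. Qed.
Lemma mscale0 a : mscale a (mzero N) = mzero N.
Proof. apply: meq => i j; rewrite /mscale /mzero; ring. Qed.
End MatAlg.

Section Bil.
Variable n : nat.
Definition bil (S : mat n) (u v : vec n) : R :=
  \big[Rplus/0]_(i < n) \big[Rplus/0]_(j < n) (u i * S i j * v j).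
Definition col (P : mat n) (i : 'I_n) : vec n := fun k => P k i.
Definition vadd (u v : vec n) : vec n := fun i => u i + v i.
Definition vscale (a : R) (u : vec n) : vec n := fun i => a * u i.
Definition mv (L : mat n) (v : vec n) : vec n := fun i => \big[Rplus/0]_(k < n) (L i k * v k).

Lemma entry_bil (S P Q : mat n) i j :
  mmul (mtr P) (mmul S Q) i j = bil S (col P i) (col Q j).
Proof.
rewrite /mmul /bil /mtr /col; apply: eq_bigr => k _; rewrite sumrMr.
apply: eq_bigr => l _; ring.
Qed.

Lemma bil_addl S u v w : bil S (vadd u v) w = bil S u w + bil S v w.
Proof.
rewrite /bil -sumrD; apply: eq_bigr => i _; rewrite -sumrD; apply: eq_bigr => j _.
rewrite /vadd; ring.
Qed.
Lemma bil_addr S u v w : bil S w (vadd u v) = bil S w u + bil S w v.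
Proof.
rewrite /bil -sumrD; apply: eq_bigr => i _; rewrite -sumrD; apply: eq_bigr => j _.
rewrite /vadd; ring.
Qed.
Lemma bil_scalel S a u w : bil S (vscale a u) w = a * bil S u w.
Proof.
rewrite /bil sumrMr; apply: eq_bigr => i _; rewrite sumrMr; apply: eq_bigr => j _.
rewrite /vscale; ring.
Qed.
Lemma bil_scaler S a u w : bil S w (vscale a u) = a * bil S w u.
Proof.
rewrite /bil sumrMr; apply: eq_bigr => i _; rewrite sumrMr; apply: eq_bigr => j _.
rewrite /vscale; ring.
Qed.
Lemma bil_sym S u v : (forall i j, S i j = S j i) -> bil S u v = bil S v u.
Proof.
move=> HS; rewrite /bil exchange_big; apply: eq_bigr => i _; apply: eq_bigr => j _.
rewrite HS; ring.
Qed.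

Lemma nondeg S (X : mat n) : scalar_product S ->
  (forall i j, mmul S X i j = 0) -> X = mzero n.
Proof.
move=> [HS Hnd] H; apply: meq => i j; rewrite /mzero.
apply: (Hnd (fun k => X k j)) => y.
rewrite exchange_big /=; apply: sum0 => l.
transitivity ((\big[Rplus/0]_(k < n) (S l k * X k j)) * y l); last first.
  by have := H l j; rewrite /mmul => ->; ring.
rewrite sumrMl; apply: eq_bigr => k _; rewrite HS; ring.
Qed.

Lemma sum_mul_sum (F G : 'I_n -> R) c :
  (\big[Rplus/0]_(k < n) F k) * c * (\big[Rplus/0]_(l < n) G l) =
  \big[Rplus/0]_(k < n) \big[Rplus/0]_(l < n) (F k * c * G l).
Proof.
rewrite sumrMl sumrMl; apply: eq_bigr => k _; rewrite sumrMr; apply: eq_bigr => l _; ring.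
Qed.

Lemma bil_mv S L u v :
  bil S (mv L u) (mv L v) = bil (mmul (mtr L) (mmul S L)) u v.
Proof.
rewrite /bil /mv /mmul /mtr.
rewrite (eq_bigr (fun i => \big[Rplus/0]_(j < n) \big[Rplus/0]_(k < n) \big[Rplus/0]_(l < n)
   (L i k * u k * S i j * (L j l * v l)))); last first.
  move=> i _; apply: eq_bigr => j _; rewrite sum_mul_sum; apply: eq_bigr => k _.
  apply: eq_bigr => l _; ring.
symmetry.
rewrite [LHS](eq_bigr (fun k => \big[Rplus/0]_(l < n) \big[Rplus/0]_(i < n) \big[Rplus/0]_(j < n)
   (L i k * u k * S i j * (L j l * v l)))); last first.
  move=> k _; apply: eq_bigr => l _; rewrite sumrMr sumrMl; apply: eq_bigr => i _.
  rewrite (_ : forall X, u k * (L i k * X) * v l = (u k * L i k * v l) * X); last by move=> X; ring.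
  rewrite sumrMr; apply: eq_bigr => j _; ring.
rewrite [LHS](eq_bigr (fun k => \big[Rplus/0]_(i < n) \big[Rplus/0]_(l < n) \big[Rplus/0]_(j < n)
   (L i k * u k * S i j * (L j l * v l)))); last by move=> k _; rewrite exchange_big.
rewrite exchange_big /=; apply: eq_bigr => i _.
rewrite [LHS](eq_bigr (fun k => \big[Rplus/0]_(j < n) \big[Rplus/0]_(l < n)
   (L i k * u k * S i j * (L j l * v l)))); last by move=> k _; rewrite exchange_big.
by rewrite exchange_big.
Qed.
End Bil.

Section Affine.
Variable n : nat.

Lemma emb_eq (i j : 'I_n) : (emb i == emb j) = (i == j).
Proof.
apply/eqP/eqP => [H|->] //; apply: val_inj; exact: (congr1 val H).
Qed.

Lemma emb_max (j : 'I_n) : (emb j == ord_max) = false.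
Proof. apply/negbTE/eqP => H; have := congr1 val H; rewrite /= => E.
have := ltn_ord j; rewrite E ltnn //. Qed.

Lemma max_emb (j : 'I_n) : (ord_max == emb j) = false.
Proof. by rewrite eq_sym emb_max. Qed.

Lemma sum_split (F : 'I_n.+1 -> R) :
  \big[Rplus/0]_(k < n.+1) F k = \big[Rplus/0]_(k < n) F (emb k) + F ord_max.
Proof. exact: big_ord_recr. Qed.

Definition affine (A : mat n.+1) :=
  (forall j : 'I_n, A ord_max (emb j) = 0) /\ A ord_max ord_max = 1.

Lemma linpart_mul (A B : mat n.+1) : affine B ->
  linpart (mmul A B) = mmul (linpart A) (linpart B).
Proof.
move=> [HB1 HB2]; apply: meq => i j; rewrite /linpart /mmul sum_split HB1; ring.
Qed.

Lemma affine_mul (A B : mat n.+1) : affine A -> affine B -> affine (mmul A B).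
Proof.
move=> [HA1 HA2] [HB1 HB2]; split.
  move=> j; rewrite /mmul sum_split HB1 sum0 ?HA2; first ring.
  by move=> k; rewrite HA1; ring.
rewrite /mmul sum_split HB2 sum0 ?HA2; first ring.
by move=> k; rewrite HA1; ring.
Qed.

Lemma act_mul (A B : mat n.+1) x : affine B -> act (mmul A B) x = act A (act B x).
Proof.
move=> [HB1 HB2]; apply: functional_extensionality => i; rewrite /act /mmul.
rewrite sum_split HB2.
rewrite (eq_bigr (fun k => \big[Rplus/0]_(m < n) (A (emb i) (emb m) * B (emb m) (emb k) * x k)));
  last first.
  by move=> k _; rewrite sum_split HB1 Rmult_0_r Rplus_0_r sumrMl.
rewrite exchange_big /=.
rewrite [in RHS](eq_bigr (fun m => A (emb i) (emb m) * (\big[Rplus/0]_(k < n) (B (emb m) (emb k) * x k))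
   + A (emb i) (emb m) * B (emb m) ord_max)); last first.
  by move=> m _ /=; rewrite Rmult_plus_distr_l.
rewrite sumrD.
have -> : \big[Rplus/0]_(i0 < n) (A (emb i) (emb i0) * \big[Rplus/0]_(k < n) (B (emb i0) (emb k) * x k))
  = \big[Rplus/0]_(j < n) \big[Rplus/0]_(k < n) (A (emb i) (emb j) * B (emb j) (emb k) * x k).
  by apply: eq_bigr => m _; rewrite sumrMr; apply: eq_bigr => k _; ring.
rewrite Rmult_1_r -Rplus_assoc; reflexivity.
Qed.

Lemma act_mid x : act (mid n.+1) x = x.
Proof.
apply: functional_extensionality => i; rewrite /act /mid emb_max.
rewrite (eq_bigr (fun k => (if i == k then 1 else 0) * x k)) ?sum_delta; first ring.
by move=> k _; rewrite emb_eq.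
Qed.

Lemma linpart_mid : linpart (mid n.+1) = mid n.
Proof. apply: meq => i j; rewrite /linpart /mid emb_eq //. Qed.

Definition vsub (u v : vec n) : vec n := fun i => u i - v i.

Lemma act_sub (A : mat n.+1) u v : vsub (act A u) (act A v) = mv (linpart A) (vsub u v).
Proof.
apply: functional_extensionality => i; rewrite /vsub /act /mv /linpart.
rewrite [RHS](eq_bigr (fun k => A (emb i) (emb k) * u k + (-1) * (A (emb i) (emb k) * v k))).
  rewrite sumrD -sumrMr; ring.
move=> k _; ring.
Qed.

Lemma in_E_affine (S : mat n) (A : mat n.+1) : in_E S A -> affine A.
Proof. by case=> H1 [H2 _]. Qed.

Lemma in_E_mul (S : mat n) (A B : mat n.+1) : in_E S A -> in_E S B -> in_E S (mmul A B).
Proof.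
move=> HA HB; have [H1 H2] := affine_mul (in_E_affine HA) (in_E_affine HB).
split => //; split => //.
rewrite (linpart_mul A (in_E_affine HB)) mtr_mul.
case: HA => _ [_ HA]; case: HB => _ [_ HB].
rewrite mmulA -(mmulA S) -(mmulA (mtr (linpart A))) HA; exact: HB.
Qed.
End Affine.

Lemma ord_cases (n : nat) (p : 'I_n.+1) : p = ord_max \/ exists i : 'I_n, p = emb i.
Proof.
case: (ltnP p n) => H.
  right; exists (Ordinal H); apply: val_inj => //.
left; apply: val_inj => /=; apply/eqP; rewrite eqn_leq H andbT -ltnS; exact: ltn_ord.
Qed.

Lemma msubE (N : nat) (A B : mat N) : msub A B = madd A (mscale (-1) B).
Proof. apply: meq => i j; rewrite /msub /madd /mscale; ring. Qed.

Lemma vec_small_pos (n : nat) (x : vec n) (P : vec n -> Prop) :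
  openV P -> P x -> exists eps, 0 < eps /\ forall v : vec n,
    (forall i, Rabs (v i) < eps) -> P (fun i => x i + v i).
Proof.
move=> HP Px; have [e [He H]] := HP x Px; exists e; split => // v Hv.
apply: H => i; rewrite (_ : x i + v i - x i = v i); [exact: Hv | ring].
Qed.

Lemma iso_expand (n : nat) (S N : mat n) :
  mmul (mtr (madd (mid n) N)) (mmul S (madd (mid n) N)) =
  madd (madd S (mmul S N)) (madd (mmul (mtr N) S) (mmul (mtr N) (mmul S N))).
Proof.
rewrite mtr_add mtr_id mmulDl !mmulDr !mmul1l mmul1r; by [].
Qed.

Lemma iso_expand2 (n : nat) (S N : mat n) t :
  mmul (mtr (madd (mid n) (mscale t N))) (mmul S (madd (mid n) (mscale t N))) =
  madd (madd S (mscale t (mmul S N)))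
       (madd (mscale t (mmul (mtr N) S)) (mscale t (mscale t (mmul (mtr N) (mmul S N))))).
Proof.
rewrite mtr_add mtr_id mtr_scale mmulDl !mmulDr !mmul1l mmul1r !mmulZl !mmulZr; by [].
Qed.

Lemma comm_path (N : nat) (z h : mat N) t : mmul z h = mmul h z ->
  mmul (madd (mid N) (mscale t (msub z (mid N)))) h =
  mmul h (madd (mid N) (mscale t (msub z (mid N)))).
Proof.
move=> H; rewrite msubE !mmulDl !mmulDr !mmulZl !mmulZr !mmulDl !mmulDr !mmulZl !mmulZr.
by rewrite !mmul1l !mmul1r H.
Qed.

Section Core.
Variables (n : nat) (S : mat n) (G : mat n.+1 -> Prop) (U : vec n -> Prop).
Hypothesis hS : scalar_product S.
Hypothesis hGI : forall A, G A -> Isom S U A.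
Hypothesis hG1 : G (mid n.+1).
Variable x0 : vec n.
Hypothesis hO : openV (fun y => exists A, G A /\ act A x0 = y).
Variable z : mat n.+1.
Hypothesis hz : centraliser_E S G z.

Definition Nz : mat n := madd (linpart z) (mscale (-1) (mid n)).
Definition cz : vec n := fun k => z (emb k) ord_max.
Definition uz : vec n := vsub (act z x0) x0.

Lemma const_q : exists eps, 0 < eps /\ forall v : vec n,
  (forall i, Rabs (v i) < eps) ->
  bil S (vsub (act z (fun i => x0 i + v i)) (fun i => x0 i + v i))
        (vsub (act z (fun i => x0 i + v i)) (fun i => x0 i + v i)) = bil S uz uz.
Proof.
have Px0 : exists A, G A /\ act A x0 = x0 by exists (mid n.+1); split => //; exact: act_mid.
have [e [He H]] := vec_small_pos hO Px0; exists e; split => // v Hv.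
have [g [Gg <-]] := H v Hv.
have [hzE hzc] := hz.
have [gE _] := hGI Gg.
rewrite -(act_mul z x0 (in_E_affine gE)) hzc // (act_mul g x0 (in_E_affine hzE)).
rewrite act_sub bil_mv; case: gE => _ [_ ->] //.
Qed.

Definition ev (i : 'I_n) : vec n := fun k => if k == i then 1 else 0.

Lemma w_expand a b i j :
  vsub (act z (fun k => x0 k + (a * ev i k + b * ev j k)))
       (fun k => x0 k + (a * ev i k + b * ev j k)) =
  vadd uz (vadd (vscale a (col Nz i)) (vscale b (col Nz j))).
Proof.
apply: functional_extensionality => k.
rewrite /vsub /uz /vadd /vscale /col /Nz /madd /mscale /act /linpart /mid /vsub.
rewrite (eq_bigr (fun l => z (emb k) (emb l) * x0 l + (a * (z (emb k) (emb l) * ev i l)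
   + b * (z (emb k) (emb l) * ev j l)))); last by move=> l _; ring.
rewrite sumrD sumrD -sumrMr -sumrMr /ev !sum_delta' /=.
rewrite (eq_sym k i) (eq_sym k j); ring.
Qed.

Lemma quad_expand (u p r : vec n) a b :
  bil S (vadd u (vadd (vscale a p) (vscale b r))) (vadd u (vadd (vscale a p) (vscale b r)))
  = bil S u u + 2 * a * bil S u p + 2 * b * bil S u r + a * a * bil S p p
    + 2 * a * b * bil S p r + b * b * bil S r r.
Proof.
have sym : forall x y : vec n, bil S x y = bil S y x := fun x y => bil_sym x y (proj1 hS).
rewrite !bil_addl !bil_addr !bil_scalel !bil_scaler (sym p u) (sym r u) (sym r p); ring.
Qed.

Lemma bil_zero i j : bil S uz (col Nz i) = 0 /\ bil S (col Nz i) (col Nz j) = 0.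
Proof.
have [e [He H]] := const_q.
have E : forall a b, Rabs a < e / 2 -> Rabs b < e / 2 ->
   2 * a * bil S uz (col Nz i) + 2 * b * bil S uz (col Nz j) + a * a * bil S (col Nz i) (col Nz i)
    + 2 * a * b * bil S (col Nz i) (col Nz j) + b * b * bil S (col Nz j) (col Nz j) = 0.
  move=> a b Ha Hb.
  have Hs : forall k, Rabs (a * ev i k + b * ev j k) < e.
  move=> k; apply: (Rle_lt_trans _ (Rabs a + Rabs b)); last lra.
  apply: (Rle_trans _ _ _ (Rabs_triang _ _)); rewrite !Rabs_mult.
  have evb : forall l, Rabs (ev l k) <= 1.
    move=> l; rewrite /ev; case: (k == l); rewrite ?Rabs_R1 ?Rabs_R0; lra.
  have := evb i; have := evb j; have := Rabs_pos a; have := Rabs_pos b; nra.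
  have Hq := H _ Hs; rewrite w_expand quad_expand in Hq; lra.
set eta := e / 4.
have Heta : Rabs eta < e / 2 by rewrite Rabs_right /eta; lra.
have Hneta : Rabs (- eta) < e / 2 by rewrite Rabs_Ropp.
have H0 : Rabs 0 < e / 2 by rewrite Rabs_R0; lra.
have E1 := E eta 0 Heta H0; have E2 := E (- eta) 0 Hneta H0.
have E3 := E 0 eta H0 Heta; have E4 := E 0 (- eta) H0 Hneta.
have E5 := E eta eta Heta Heta.
have etan : eta <> 0 by rewrite /eta; lra.
set X := bil S uz (col Nz i) in E1 E2 E3 E4 E5 *.
set Y := bil S uz (col Nz j) in E1 E2 E3 E4 E5 *.
set P := bil S (col Nz i) (col Nz i) in E1 E2 E3 E4 E5 *.
set Q := bil S (col Nz i) (col Nz j) in E1 E2 E3 E4 E5 *.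
set R' := bil S (col Nz j) (col Nz j) in E1 E2 E3 E4 E5 *.
have hX : eta * X = 0 by nra.
have hP : eta * (eta * P) = 0 by nra.
have hR : eta * (eta * R') = 0 by nra.
have hY : eta * Y = 0 by nra.
have hP0 : P = 0 by case: (Rmult_integral _ _ hP) => // /Rmult_integral [] //.
have hR0 : R' = 0 by case: (Rmult_integral _ _ hR) => // /Rmult_integral [] //.
have hY0 : Y = 0 by case: (Rmult_integral _ _ hY).
have hQ : eta * (eta * Q) = 0 by nra.
split; first by case: (Rmult_integral _ _ hX).
by case: (Rmult_integral _ _ hQ) => // /Rmult_integral [] //.
Qed.

Lemma F1 : mmul (mtr Nz) (mmul S Nz) = mzero n.
Proof. apply: meq => i j; rewrite entry_bil; exact: (proj2 (bil_zero i j)). Qed.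

Lemma linpart_z : linpart z = madd (mid n) Nz.
Proof. apply: meq => i j; rewrite /Nz /madd /mscale; ring. Qed.

Lemma F2 : madd (mmul (mtr Nz) S) (mmul S Nz) = mzero n.
Proof.
have [_ [_ Hiso]] := hz.1.
rewrite linpart_z iso_expand in Hiso.
apply: meq => i j; have := congr1 (fun X => X i j) Hiso; have := congr1 (fun X => X i j) F1.
rewrite /madd /mzero /=; lra.
Qed.

Lemma SN : mmul S Nz = mscale (-1) (mmul (mtr Nz) S).
Proof.
apply: meq => i j; have := congr1 (fun X => X i j) F2; rewrite /madd /mscale /mzero /=; lra.
Qed.

Lemma F3 : mmul Nz Nz = mzero n.
Proof.
apply: (nondeg hS) => i j.
by rewrite -mmulA SN mmulZl mmulA F1 mscale0.
Qed.

Lemma F4 k : \big[Rplus/0]_(l < n) (Nz k l * cz l) = 0.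
Proof.
pose C : mat n := fun k _ => cz k.
pose X0 : mat n := fun k _ => x0 k.
suff : mmul Nz C = mzero n by move/(congr1 (fun X => X k k)).
apply: (nondeg hS) => i j.
rewrite -mmulA SN mmulZl mmulA {1}/mscale entry_bil.
have -> : col C j = vadd uz (vscale (-1) (col (mmul Nz X0) i)).
  apply: functional_extensionality => l.
  rewrite /col /C /vadd /vscale /uz /vsub /act /mmul /X0 /Nz /madd /mscale /linpart /cz.
  rewrite [X in -1 * X](eq_bigr (fun m => z (emb l) (emb m) * x0 m + (-1) * (mid n l m * x0 m))); last by move=> m _; ring.
  rewrite sumrD -sumrMr /mid sum_delta; ring.
rewrite bil_addr bil_scaler (bil_sym (col Nz i) uz (proj1 hS)) (proj1 (bil_zero i i)).
rewrite -entry_bil -(mmulA S) -mmulA F1 mmul0l /mzero; ring.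
Qed.

Lemma Mrow (q : 'I_n.+1) : msub z (mid n.+1) ord_max q = 0.
Proof.
have [[H1 [H2 _]] _] := hz; rewrite /msub /mid.
case: (ord_cases q) => [->|[j ->]]; first by rewrite eqxx H2; ring.
by rewrite max_emb H1; ring.
Qed.

Lemma Memb (i k : 'I_n) : msub z (mid n.+1) (emb i) (emb k) = Nz i k.
Proof. by rewrite /msub /mid emb_eq /Nz /madd /mscale /linpart /mid; ring. Qed.

Lemma Mmax (k : 'I_n) : msub z (mid n.+1) (emb k) ord_max = cz k.
Proof. by rewrite /msub /mid emb_max /cz; ring. Qed.

Lemma sq0 : mmul (msub z (mid n.+1)) (msub z (mid n.+1)) = mzero n.+1.
Proof.
apply: meq => p q; rewrite /mmul sum_split Mrow Rmult_0_r Rplus_0_r /mzero.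
case: (ord_cases p) => [->|[i ->]].
  by apply: sum0 => k; rewrite Mrow; ring.
case: (ord_cases q) => [->|[j ->]].
  rewrite -[RHS](F4 i); apply: eq_bigr => k _; by rewrite Memb Mmax.
transitivity (mmul Nz Nz i j); last by rewrite F3.
by rewrite /mmul; apply: eq_bigr => k _; rewrite !Memb.
Qed.

Lemma path_in t : centraliser_E S G (madd (mid n.+1) (mscale t (msub z (mid n.+1)))).
Proof.
have [[H1 [H2 _]] Hc] := hz.
split; last by move=> h Gh; apply: comm_path; exact: Hc.
split.
  by move=> j; rewrite /madd /mscale Mrow /mid max_emb; ring.
split; first by rewrite /madd /mscale Mrow /mid eqxx; ring.
have -> : linpart (madd (mid n.+1) (mscale t (msub z (mid n.+1)))) = madd (mid n) (mscale t Nz).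
  by apply: meq => i j; rewrite /linpart /madd /mscale Memb /mid emb_eq.
rewrite iso_expand2 F1 mscale0 mscale0.
apply: meq => i j; have := congr1 (fun X => X i j) F2; rewrite /madd /mscale /mzero /=.
move=> E.
transitivity (S i j + t * (mmul (mtr Nz) S i j + mmul S Nz i j)); first ring.
by rewrite E; ring.
Qed.
End Core.

Ltac mnorm := do 8 (rewrite ?mmulDl ?mmulDr ?mmulZl ?mmulZr ?mmulA ?mmul1l ?mmul1r
   ?mmul0l ?mmul0r ?mscale0 ?madd0l ?madd0r).

Section Grp.
Variable N : nat.
Variable Z : mat N -> Prop.
Hypothesis hsq : forall z, Z z -> mmul (msub z (mid N)) (msub z (mid N)) = mzero N.
Hypothesis hpath : forall z t, Z z -> Z (madd (mid N) (mscale t (msub z (mid N)))).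
Hypothesis hmul : forall a b, Z a -> Z b -> Z (mmul a b).
Hypothesis hI : Z (mid N).

Lemma decomp (a : mat N) : a = madd (mid N) (msub a (mid N)).
Proof. apply: meq => i j; rewrite /madd /msub; ring. Qed.

Lemma sqX a X : Z a -> mmul (msub a (mid N)) (mmul (msub a (mid N)) X) = mzero N.
Proof. by move=> Za; rewrite -mmulA hsq // mmul0l. Qed.

Lemma prod_minus (A B : mat N) s t :
  msub (mmul (madd (mid N) (mscale s A)) (madd (mid N) (mscale t B))) (mid N) =
  madd (mscale s A) (madd (mscale t B) (mscale (s * t) (mmul A B))).
Proof.
rewrite mmulDl !mmulDr !mmul1l mmul1r mmulZl mmulZr.
by apply: meq => i j; rewrite /msub /madd /mscale; ring.
Qed.

Lemma anti_alg (A B : mat N) : mmul A A = mzero N -> mmul B B = mzero N ->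
  (forall s t, mmul
   (madd (mscale s A) (madd (mscale t B) (mscale (s * t) (mmul A B))))
   (madd (mscale s A) (madd (mscale t B) (mscale (s * t) (mmul A B)))) = mzero N) ->
  mmul B A = mscale (-1) (mmul A B).
Proof.
move=> hA hB E.
have hAX : forall X, mmul A (mmul A X) = mzero N by move=> X; rewrite -mmulA hA mmul0l.
have hBX : forall X, mmul B (mmul B X) = mzero N by move=> X; rewrite -mmulA hB mmul0l.
apply: meq => i j.
have E1 := congr1 (fun X => X i j) (E 1 1).
have E2 := congr1 (fun X => X i j) (E 1 (-1)).
have E3 := congr1 (fun X => X i j) (E (-1) 1).
have E4 := congr1 (fun X => X i j) (E (-1) (-1)).
move: E1 E2 E3 E4; mnorm; rewrite ?hA ?hB ?hAX ?hBX; mnorm.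
rewrite /madd /mscale /mzero /=.
lra.
Qed.

Lemma anti a b : Z a -> Z b ->
  mmul (msub b (mid N)) (msub a (mid N)) = mscale (-1) (mmul (msub a (mid N)) (msub b (mid N))).
Proof.
move=> Za Zb; apply: anti_alg; try exact: hsq.
move=> s t; rewrite -prod_minus; apply: hsq; apply: hmul; exact: hpath.
Qed.

Lemma inv_alg (M : mat N) : mmul M M = mzero N ->
  mmul (madd (mid N) M) (madd (mid N) (mscale (-1) M)) = mid N /\
  mmul (madd (mid N) (mscale (-1) M)) (madd (mid N) M) = mid N.
Proof.
move=> hM; split; mnorm; rewrite hM mscale0 madd0r;
  by apply: meq => i j; rewrite /madd /mscale; ring.
Qed.

Lemma grp_sub : is_subgroup Z.
Proof.
split => //; split => // a Za.
exists (madd (mid N) (mscale (-1) (msub a (mid N)))); split; first exact: hpath.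
have [H1 H2] := inv_alg (hsq Za); rewrite -decomp in H1 H2; by split.
Qed.

Lemma inv_unique a a' : Z a -> mmul a a' = mid N ->
  a' = madd (mid N) (mscale (-1) (msub a (mid N))).
Proof.
move=> Za H; have [_ H2] := inv_alg (hsq Za); rewrite -decomp in H2.
by rewrite -[a']mmul1l -{1}H2 mmulA H mmul1r.
Qed.

Lemma comm_alg (A B C : mat N) :
  mmul A A = mzero N -> mmul B B = mzero N -> mmul C C = mzero N ->
  mmul B A = mscale (-1) (mmul A B) -> mmul C A = mscale (-1) (mmul A C) ->
  mmul C B = mscale (-1) (mmul B C) ->
  mmul (mmul (mmul (madd (mid N) A) (madd (mid N) B))
             (mmul (madd (mid N) (mscale (-1) A)) (madd (mid N) (mscale (-1) B))))
       (madd (mid N) C) =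
  mmul (madd (mid N) C)
       (mmul (mmul (madd (mid N) A) (madd (mid N) B))
             (mmul (madd (mid N) (mscale (-1) A)) (madd (mid N) (mscale (-1) B)))).
Proof.
move=> hA hB hC hBA hCA hCB.
have hAX : forall X, mmul A (mmul A X) = mzero N by move=> X; rewrite -mmulA hA mmul0l.
have hBX : forall X, mmul B (mmul B X) = mzero N by move=> X; rewrite -mmulA hB mmul0l.
have hCX : forall X, mmul C (mmul C X) = mzero N by move=> X; rewrite -mmulA hC mmul0l.
have hBAX : forall X, mmul B (mmul A X) = mscale (-1) (mmul A (mmul B X)).
  by move=> X; rewrite -mmulA hBA mmulZl mmulA.
have hCAX : forall X, mmul C (mmul A X) = mscale (-1) (mmul A (mmul C X)).
  by move=> X; rewrite -mmulA hCA mmulZl mmulA.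
have hCBX : forall X, mmul C (mmul B X) = mscale (-1) (mmul B (mmul C X)).
  by move=> X; rewrite -mmulA hCB mmulZl mmulA.
do 6 (mnorm; rewrite ?hA ?hB ?hC ?hAX ?hBX ?hCX ?hBAX ?hCAX ?hCBX ?hBA ?hCA ?hCB).
apply: meq => i j; rewrite /madd /mscale /mzero; ring.
Qed.

Lemma grp_nil : nilpotent_class_le2 Z.
Proof.
move=> a a' b b' c Za Za' Zb Zb' Zc Ha Hb.
rewrite (inv_unique Za Ha) (inv_unique Zb Hb).
have := comm_alg (hsq Za) (hsq Zb) (hsq Zc) (anti Za Zb) (anti Za Zc) (anti Zb Zc).
by rewrite -!decomp.
Qed.
End Grp.

Lemma interval_conn (P1 P2 : R -> Prop) :
  (forall t, P1 t -> exists d, 0 < d /\ forall s, Rabs (s - t) < d -> P1 s) ->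
  (forall t, P2 t -> exists d, 0 < d /\ forall s, Rabs (s - t) < d -> P2 s) ->
  (forall t, 0 <= t <= 1 -> P1 t \/ P2 t) ->
  (forall t, 0 <= t <= 1 -> P1 t -> P2 t -> False) ->
  P1 0 -> P1 1.
Proof.
move=> O1 O2 cov dis P10.
pose E := fun t => 0 <= t <= 1 /\ forall s, 0 <= s <= t -> P1 s.
have E0 : E 0.
  split; first lra. move=> s Hs; have -> : s = 0 by lra. exact: P10.
have Eb : bound E by exists 1 => t [Ht _]; lra.
have [m [Hub Hlub]] := completeness E Eb (ex_intro _ 0 E0).
have m0 : 0 <= m by apply: Hub.
have m1 : m <= 1 by apply: Hlub => t [Ht _]; lra.
have approx : forall x, x < m -> exists t, E t /\ x < t.
  move=> x Hx; apply: NNPP => Hn.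
  have : m <= x.
    apply: Hlub => t Et; apply: Rnot_lt_le => Hxt; apply: Hn; exists t; split => //.
  lra.
have below : forall s, 0 <= s < m -> P1 s.
  move=> s Hs; have [t [[Ht Et] Hst]] := approx s (proj2 Hs); apply: Et; lra.
have P1m : P1 m.
  case: (cov m (conj m0 m1)) => // P2m.
  have [d [Hd Hd']] := O2 m P2m.
  have [t [[Ht Et] Hmt]] := approx (m - d) ltac:(lra).
  have tm : t <= m by apply: Hub; split.
  exfalso; apply: (dis t Ht); first by apply: Et; lra.
  apply: Hd'; rewrite Rabs_left1; lra.
have -> : 1 = m.
  apply: Rle_antisym => //; apply: Rnot_lt_le => Hm1.
  have [d [Hd Hd']] := O1 m P1m.
  pose m' := Rmin 1 (m + d / 2).
  have Hm' : m < m' by rewrite /m'; apply: Rmin_glb_lt; lra.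
  have : E m'.
    split; first by split; [ lra | rewrite /m'; apply: Rmin_l ].
    move=> s Hs.
    case: (Rlt_le_dec s m) => Hsm; first by apply: below; lra.
    case: (Req_dec s m) => [->|Hne] //.
    apply: Hd'; rewrite Rabs_right; last lra.
    have : m' <= m + d / 2 by apply: Rmin_r.
    lra.
  move/Hub; lra.
exact: P1m.
Qed.

Lemma sum_ge (n : nat) (F : 'I_n -> R) i : (forall k, 0 <= F k) ->
  F i <= \big[Rplus/0]_(k < n) F k.
Proof.
move=> H; rewrite (bigD1 i) //=.
have : 0 <= \big[Rplus/0]_(k < n | k != i) F k.
  apply: (big_ind (fun x => 0 <= x)); [lra | move=> x y; lra | move=> k _; exact: H].
move=> h; rewrite -{1}(Rplus_0_r (F i)); apply: Rplus_le_compat_l; exact: h.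
Qed.

Lemma sum_nonneg (n : nat) (F : 'I_n -> R) : (forall k, 0 <= F k) ->
  0 <= \big[Rplus/0]_(k < n) F k.
Proof.
move=> H; apply: (big_ind (fun x => 0 <= x)); [lra | move=> x y; lra | move=> k _; exact: H].
Qed.

Lemma path_open (N : nat) (O : mat N -> Prop) (M : mat N) t :
  openM O -> O (madd (mid N) (mscale t M)) ->
  exists d, 0 < d /\ forall s, Rabs (s - t) < d -> O (madd (mid N) (mscale s M)).
Proof.
move=> HO Ht; have [e [He He']] := HO _ Ht.
pose K := 1 + \big[Rplus/0]_(i < N) \big[Rplus/0]_(j < N) Rabs (M i j).
have HK0 : 0 <= \big[Rplus/0]_(i < N) \big[Rplus/0]_(j < N) Rabs (M i j).
  apply: sum_nonneg => i; apply: sum_nonneg => j; exact: Rabs_pos.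
have HK : forall i j, Rabs (M i j) <= K.
  move=> i j; rewrite /K.
  have h1 : Rabs (M i j) <= \big[Rplus/0]_(j < N) Rabs (M i j).
    by apply: (@sum_ge N (fun j => Rabs (M i j)) j) => k; exact: Rabs_pos.
  have h2 : \big[Rplus/0]_(j < N) Rabs (M i j) <=
     \big[Rplus/0]_(i < N) \big[Rplus/0]_(j < N) Rabs (M i j).
    apply: (@sum_ge N (fun i => \big[Rplus/0]_(j < N) Rabs (M i j)) i) => k.
    apply: sum_nonneg => l; exact: Rabs_pos.
  lra.
have Kpos : 0 < K by rewrite /K; lra.
exists (e / K); split; first by apply: Rdiv_lt_0_compat.
move=> s Hs; apply: He' => i j.
rewrite /madd /mscale (_ : mid N i j + s * M i j - (mid N i j + t * M i j) = (s - t) * M i j);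
  last ring.
rewrite Rabs_mult.
have : Rabs (s - t) * K < e.
  have := Rmult_lt_compat_r K _ _ Kpos Hs.
  rewrite /Rdiv Rmult_assoc Rinv_l ?Rmult_1_r //; lra.
have := HK i j; have := Rabs_pos (s - t); have := Rabs_pos (M i j); nra.
Qed.

Section Conn.
Variable N : nat.
Variable Z : mat N -> Prop.
Hypothesis hpath : forall z t, Z z -> Z (madd (mid N) (mscale t (msub z (mid N)))).
Hypothesis hI : Z (mid N).

Lemma conn_aux (O1 O2 : mat N -> Prop) : openM O1 -> openM O2 ->
  (forall z, Z z -> O1 z \/ O2 z) -> (forall z, Z z -> O1 z -> O2 z -> False) ->
  O1 (mid N) -> forall z, Z z -> ~ O2 z.
Proof.
move=> HO1 HO2 cov dis H1 z Zz H2.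
pose p := fun t => madd (mid N) (mscale t (msub z (mid N))).
have p0 : p 0 = mid N by apply: meq => i j; rewrite /p /madd /mscale; ring.
have p1 : p 1 = z by apply: meq => i j; rewrite /p /madd /mscale /msub; ring.
have : O1 (p 1).
  apply: (interval_conn (P1 := fun t => O1 (p t)) (P2 := fun t => O2 (p t))).
  - move=> t; exact: path_open.
  - move=> t; exact: path_open.
  - move=> t _; apply: cov; exact: hpath.
  - move=> t _; apply: dis; exact: hpath.
  - by rewrite p0.
rewrite p1 => H1z; exact: (dis z Zz H1z H2).
Qed.

Lemma conn : connected_in (@openM N) Z.
Proof.
move=> O1 O2 HO1 HO2 cov dis.
case: (cov _ hI) => H.
  right; exact: (conn_aux HO1 HO2 cov dis H).
left => z Zz H1; apply: (conn_aux HO2 HO1 _ _ H Zz H1).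
  move=> y Zy; case: (cov y Zy); auto.
move=> y Zy a b; exact: (dis y Zy b a).
Qed.
End Conn.


Theorem mainTheorem20 (n : nat) (S : mat n) (U : vec n -> Prop)
  (G : mat n.+1 -> Prop) :
  scalar_product S ->
  homogeneous_domain S U ->
  is_subgroup G -> (forall A, G A -> Isom S U A) ->
  has_open_orbit G ->
  let Z := centraliser_E S G in
  is_subgroup Z /\
  connected_in (@openM n.+1) Z /\
  (forall g, Z g -> unipotent g) /\
  nilpotent_class_le2 Z /\
  (forall g, Z g ->
     mmul (msub g (mid n.+1)) (msub g (mid n.+1)) = mzero n.+1).
Proof.
move=> hS _ hGs hGI [x0 hO] Z.
have hG1 : G (mid n.+1) := hGs.1.
have hsq : forall z, Z z -> mmul (msub z (mid n.+1)) (msub z (mid n.+1)) = mzero n.+1 :=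
  fun z hz => sq0 hS hGI hG1 hO hz.
have hpath : forall z t, Z z -> Z (madd (mid n.+1) (mscale t (msub z (mid n.+1)))) :=
  fun z t hz => path_in hS hGI hG1 hO hz t.
have hI : Z (mid n.+1).
  split; last by move=> h _; rewrite mmul1l mmul1r.
  split; first by move=> j; rewrite /mid max_emb.
  split; first by rewrite /mid eqxx.
  by rewrite linpart_mid mtr_id mmul1l mmul1r.
have hmul : forall a b, Z a -> Z b -> Z (mmul a b).
  move=> a b [Ea Ca] [Eb Cb]; split; first exact: in_E_mul.
  by move=> h Gh; rewrite mmulA Cb // -mmulA Ca // mmulA.
split; first exact: grp_sub.
split; first exact: conn.
split; first by move=> g Zg; exists 2%nat; rewrite /= mmul1r; exact: hsq.
split; first exact: grp_nil.
exact: hsq.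
Qed.
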